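(* Let $P=\{x\in\mathbb{R}^n: Ax\ge b\}$ with rational data be full-dimensional and pointed, $c\in\mathbb{R}^n$, and $\bar x$ a basic optimal solution of $\min\{c^\top x: x\in P\}$. Consider a split disjunction with two terms $P^1=\{x\in P:\pi^\top x\le\pi_0\}$ and $P^2=\{x\in P:\pi^\top x\ge\pi_0+1\}$, and let $P_D=\operatorname{cl}\operatorname{conv}(P^1\cup P^2)$, with $\bar x\notin P_D$. For $t\in\{1,2\}$, let $p^t$ be a basic optimal solution of $\min\{c^\top x:x\in P^t\}$, $C^t$ the basis cone at $p^t$ with extreme rays $r^{t1},\dots,r^{tn}$, and $P_D^0=\operatorname{conv}\{p^1,p^2\}+\operatorname{cone}\{r^{tj}: t\in\{1,2\}, j\in[n]\}$. Suppose the bases defining $p^1$ and $p^2$ are unique. Then every facet of $P_D^0$ that is tight on both $p^1$ and $p^2$ is a facet of $P_D$. Moreover, every facet of $P_D$ that is tight on both $p^1$ and $p^2$ and cuts off $\bar x$ exists as a facet of $P_D^0$.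
   Context: A cobasis of a basic solution $p^t$ of $P^t$ is a set of $n$ linearly independent inequalities from the system defining $P^t$ that are tight at $p^t$; the basis cone $C^t$ at $p^t$ is the intersection of these $n$ half-spaces, a cone with apex $p^t$ and $n$ extreme rays. Here $\pi\in\mathbb{Z}^n$, $\pi_0\in\mathbb{Z}$ define the split. *)

(* Defs.v *)
From HB Require Import structures.
From mathcomp Require Import all_boot all_order all_algebra.
From mathcomp Require Import all_classical all_reals topology num_topology matrix_topology.
Set Implicit Arguments. Unset Strict Implicit. Unset Printing Implicit Defensive.
Import Order.TTheory GRing.Theory Num.Theory.
Local Open Scope ring_scope.
Import numFieldTopology.Exports.
Local Open Scope classical_set_scope.

Section Polyhedra.
Variables (R : realType) (n : nat).
Notation V := 'cV[R]_n.

Definition dot (u v : V) : R := \sum_(i < n) u i 0 * v i 0.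

Definition polyh (M : nat) (A : 'M[R]_(M, n)) (b : 'cV[R]_M) : set V :=
  [set x | forall i : 'I_M, b i 0 <= (A *m x) i 0].

Definition tight (M : nat) (A : 'M[R]_(M, n)) (b : 'cV[R]_M) (x : V) (i : 'I_M) :=
  (A *m x) i 0 = b i 0.

Definition lin_indep_rows (M : nat) (A : 'M[R]_(M, n)) (B : {set 'I_M}) :=
  forall l : 'I_M -> R, \sum_(i in B) l i *: row i A = 0 ->
    forall i, i \in B -> l i = 0.

Definition cobasis (M : nat) (A : 'M[R]_(M, n)) (b : 'cV[R]_M) (p : V)
    (B : {set 'I_M}) :=
  [/\ #|B| = n, lin_indep_rows A B & forall i, i \in B -> tight A b p i].

Definition basic_optimal (M : nat) (A : 'M[R]_(M, n)) (b : 'cV[R]_M) (c p : V) :=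
  [/\ polyh A b p, exists B, cobasis A b p B &
      forall x, polyh A b x -> dot c p <= dot c x].

Definition basis_cone (M : nat) (A : 'M[R]_(M, n)) (b : 'cV[R]_M)
    (B : {set 'I_M}) : set V :=
  [set x | forall i, i \in B -> b i 0 <= (A *m x) i 0].

Definition conv (S : set V) : set V :=
  [set x | exists (k : nat) (s : 'I_k -> V) (l : 'I_k -> R),
     [/\ forall j, S (s j), forall j, 0 <= l j, \sum_j l j = 1 &
         x = \sum_j l j *: s j]].

Definition cone (S : set V) : set V :=
  [set x | exists (k : nat) (s : 'I_k -> V) (l : 'I_k -> R),
     [/\ forall j, S (s j), forall j, 0 <= l j & x = \sum_j l j *: s j]].

Definition msum (S T : set V) : set V :=
  [set z | exists x y, [/\ S x, T y & z = x + y]].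

Definition ext_ray_dir (C : set V) (p : V) : set V :=
  [set d | [/\ C (p + d), d != 0 &
     forall u v, C (p + u) -> C (p + v) -> d = u + v ->
       exists lu lv, [/\ 0 <= lu, 0 <= lv, u = lu *: d & v = lv *: d]]].

Definition has_affindep (S : set V) (k : nat) :=
  exists (x0 : V) (x : 'I_k -> V),
    [/\ S x0, forall j, S (x j) &
        forall l : 'I_k -> R, \sum_j l j *: (x j - x0) = 0 -> forall j, l j = 0].

Definition affdim (S : set V) (k : nat) := has_affindep S k /\ ~ has_affindep S k.+1.

Definition pointed (S : set V) :=
  ~ exists x d : V, d != 0 /\ forall lam : R, S (x + lam *: d).

Definition valid_ineq (S : set V) (a : V) (beta : R) :=
  forall x, S x -> beta <= dot a x.

Definition face_of (S : set V) (a : V) (beta : R) : set V :=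
  [set x | S x /\ dot a x = beta].

Definition facet_ineq (S : set V) (a : V) (beta : R) :=
  valid_ineq S a beta /\
  exists k, affdim S k.+1 /\ affdim (face_of S a beta) k.

End Polyhedra.

Section Split.
Variables (R : realType) (n m : nat).

Definition ratmx (p q : nat) (A : 'M[rat]_(p, q)) : 'M[R]_(p, q) :=
  map_mx (fun x : rat => ratr x) A.
Definition intmx (p q : nat) (A : 'M[int]_(p, q)) : 'M[R]_(p, q) :=
  map_mx (fun x : int => x%:~R) A.

(* system of P^1 = {x in P : pi^T x <= pi0}, written as  -pi^T x >= -pi0 *)
Definition sysA1 (A : 'M[rat]_(m, n)) (pi : 'cV[int]_n) : 'M[R]_(m + 1, n) :=
  col_mx (ratmx A) (- (intmx pi)^T).
Definition sysb1 (b : 'cV[rat]_m) (pi0 : int) : 'cV[R]_(m + 1) :=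
  col_mx (ratmx b) (const_mx (- pi0%:~R)).
Definition sysA2 (A : 'M[rat]_(m, n)) (pi : 'cV[int]_n) : 'M[R]_(m + 1, n) :=
  col_mx (ratmx A) (intmx pi)^T.
Definition sysb2 (b : 'cV[rat]_m) (pi0 : int) : 'cV[R]_(m + 1) :=
  col_mx (ratmx b) (const_mx (pi0 + 1)%:~R).

Definition PD (A : 'M[rat]_(m, n)) (b : 'cV[rat]_m) (pi : 'cV[int]_n) (pi0 : int)
  : set 'cV[R]_n :=
  closure (conv (polyh (sysA1 A pi) (sysb1 b pi0) `|` polyh (sysA2 A pi) (sysb2 b pi0))).

Definition PD0 (A : 'M[rat]_(m, n)) (b : 'cV[rat]_m) (pi : 'cV[int]_n) (pi0 : int)
  (p1 p2 : 'cV[R]_n) (B1 B2 : {set 'I_(m + 1)}) : set 'cV[R]_n :=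
  msum (conv [set x | x = p1 \/ x = p2])
       (cone (ext_ray_dir (basis_cone (sysA1 A pi) (sysb1 b pi0) B1) p1 `|`
              ext_ray_dir (basis_cone (sysA2 A pi) (sysb2 b pi0) B2) p2)).

End Split.

(* Main.v *)
Require Import Defs.
From HB Require Import structures.
From mathcomp Require Import all_boot all_order all_algebra.
From mathcomp Require Import all_classical all_reals topology num_topology matrix_topology.
Set Implicit Arguments. Unset Strict Implicit. Unset Printing Implicit Defensive.
Import Order.TTheory GRing.Theory Num.Theory.
Local Open Scope ring_scope.
Import numFieldTopology.Exports.
Local Open Scope classical_set_scope.

Section LA.
Variables (R : realType) (n : nat).
Local Notation V := 'cV[R]_n.

Lemma dotDr (a x y : V) : dot a (x + y) = dot a x + dot a y.
Proof. by rewrite /dot -big_split; apply: eq_bigr => i _; rewrite mxE mulrDr. Qed.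
Lemma dotZr (a x : V) c : dot a (c *: x) = c * dot a x.
Proof. by rewrite /dot mulr_sumr; apply: eq_bigr => i _; rewrite mxE mulrCA. Qed.
Lemma dotNr (a x : V) : dot a (- x) = - dot a x.
Proof. by rewrite -scaleN1r dotZr mulN1r. Qed.
Lemma dotBr (a x y : V) : dot a (x - y) = dot a x - dot a y.
Proof. by rewrite dotDr dotNr. Qed.
Lemma dot0r (a : V) : dot a 0 = 0.
Proof. by rewrite /dot big1 // => i _; rewrite mxE mulr0. Qed.
Lemma dotC (a x : V) : dot a x = dot x a.
Proof. by rewrite /dot; apply: eq_bigr => i _; rewrite mulrC. Qed.
Lemma dot_sumr k (a : V) (f : 'I_k -> V) : dot a (\sum_j f j) = \sum_j dot a (f j).
Proof.
rewrite /dot; under eq_bigr do rewrite summxE mulr_sumr.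
exact: exchange_big.
Qed.
Lemma dotDl (a b x : V) : dot (a + b) x = dot a x + dot b x.
Proof. by rewrite dotC dotDr !(dotC x). Qed.
Lemma dotZl (a x : V) c : dot (c *: a) x = c * dot a x.
Proof. by rewrite dotC dotZr dotC. Qed.
Lemma dot_gt0 (a : V) : a != 0 -> 0 < dot a a.
Proof.
move=> a0; rewrite lt_def; apply/andP; split; last first.
  by rewrite /dot sumr_ge0 // => i _; rewrite -expr2 sqr_ge0.
apply: contra a0 => /eqP H; apply/eqP/matrixP => i j; rewrite (ord1 j) mxE.
have P0 : forall k : 'I_n, true -> 0 <= a k 0 * a k 0.
  by move=> k _; rewrite -expr2 sqr_ge0.
have := @psumr_eq0P _ _ _ _ P0 H i isT; move/eqP.
by rewrite mulf_eq0 orbb => /eqP.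
Qed.

Lemma valid_closure (S : set V) a beta :
  valid_ineq S a beta -> valid_ineq (closure S) a beta.
Proof.
move=> vS x clx; rewrite leNgt; apply/negP => lt.
pose d := beta - dot a x.
have d0 : 0 < d by rewrite subr_gt0.
pose s := 1 + \sum_i `|a i 0|.
have s0 : 0 < s by rewrite ltr_pwDl // sumr_ge0.
pose e := d / s.
have e0 : 0 < e by rewrite divr_gt0.
have [y [Sy By]] : S `&` [set y | forall i j, ball (x i j) e (y i j)] !=set0.
  apply: clx; exists (fun i j => ball (x i j) e) => //.
  by move=> i j; exact: nbhsx_ballx.
have := vS y Sy; apply/negP; rewrite -ltNge.
have : dot a y - dot a x <= \sum_i `|a i 0| * e.
  rewrite /dot -sumrB; apply: ler_sum => i _; rewrite -mulrBr.
  apply: le_trans (ler_norm _) _; rewrite normrM ler_wpM2l //.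
  by have := By i 0; rewrite /ball /= distrC => /ltW.
rewrite -mulr_suml => H; apply: (le_lt_trans (y := dot a x + (\sum_i `|a i 0|) * e)).
  by rewrite -lerBlDl.
rewrite -ltrBrDl -/d /e mulrA ltr_pdivrMr // mulrC ltr_pM2l //.
by rewrite /s; apply: ltr_pwDl.
Qed.

Lemma valid_conv (S : set V) a beta :
  valid_ineq S a beta -> valid_ineq (conv S) a beta.
Proof.
move=> vS x [k [s [l [Ss l0 l1 ->]]]].
rewrite dot_sumr -[beta]mul1r -l1 mulr_suml; apply: ler_sum => j _.
by rewrite dotZr ler_wpM2l //; apply: vS.
Qed.


Definition indep k (v : 'I_k -> V) :=
  forall l : 'I_k -> R, \sum_j l j *: v j = 0 -> forall j, l j = 0.
Definition rmx k (v : 'I_k -> V) : 'M[R]_(k, n) := \matrix_(j, i) v j i 0.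

Lemma rmx_mul k (v : 'I_k -> V) (z : 'rV_k) : z *m rmx v = (\sum_j z 0 j *: v j)^T.
Proof. by apply/rowP => i; rewrite !mxE summxE; apply: eq_bigr => j _; rewrite !mxE. Qed.

Lemma indep_free k (v : 'I_k -> V) : indep v -> row_free (rmx v).
Proof.
move=> iv; rewrite -kermx_eq0; apply/eqP/matrixP => r j.
have := mulmx_ker (rmx v); move/(congr1 (row r)); rewrite row_mul row0 rmx_mul.
move/(congr1 trmx); rewrite trmxK trmx0 => H.
by have := iv _ H j; rewrite [row _ _ _ _]mxE => ->; rewrite mxE.
Qed.

Lemma free_indep k (v : 'I_k -> V) : row_free (rmx v) -> indep v.
Proof.
move=> fv l H j.
have : (\row_j l j) *m rmx v = 0.
  by rewrite rmx_mul; under eq_bigr do rewrite mxE; rewrite H trmx0.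
by move/eqP; rewrite mulmx_free_eq0 // => /eqP /rowP /(_ j); rewrite !mxE.
Qed.

Lemma indep_le k (v : 'I_k -> V) : indep v -> (k <= n)%N.
Proof.
move/indep_free; rewrite -row_leq_rank => H; exact: leq_trans H (rank_leq_col _).
Qed.

Definition ext k (v : 'I_k -> V) (a : V) : 'I_k.+1 -> V :=
  fun j => if unlift ord_max j is Some i then v i else a.

Lemma ext_widen k (v : 'I_k -> V) a i : ext v a (widen_ord (leqnSn k) i) = v i.
Proof.
have -> : widen_ord (leqnSn k) i = lift ord_max i.
  by apply: val_inj; rewrite /= /bump leqNgt ltn_ord.
by rewrite /ext liftK.
Qed.
Lemma ext_max k (v : 'I_k -> V) a : ext v a ord_max = a.
Proof. by rewrite /ext unlift_none. Qed.

Lemma indep_ext k (v : 'I_k -> V) a : indep v -> a != 0 ->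
  (forall j, dot a (v j) = 0) -> indep (ext v a).
Proof.
move=> iv a0 av l H.
rewrite big_ord_recr /= ext_max in H.
have E : \sum_(i < k) l (widen_ord (leqnSn k) i) *: ext v a (widen_ord (leqnSn k) i)
  = \sum_i l (widen_ord (leqnSn k) i) *: v i.
  by apply: eq_bigr => i _; rewrite ext_widen.
rewrite E in H.
have lm : l ord_max = 0.
  have := congr1 (dot a) H; rewrite dotDr dot_sumr dotZr dot0r.
  rewrite big1 ?add0r; last by move=> i _; rewrite dotZr av mulr0.
  move/eqP; rewrite mulf_eq0 => /orP [/eqP //|]; by rewrite gt_eqF // dot_gt0.
rewrite lm scale0r addr0 in H.
move=> j; case: (unliftP ord_max j) => [i ->|->] //.
have -> : lift ord_max i = widen_ord (leqnSn k) i.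
  by apply: val_inj; rewrite /= /bump leqNgt ltn_ord.
exact: (iv _ H i).
Qed.

Lemma dot_ext k (v : 'I_k -> V) a w : dot w a = 0 -> (forall j, dot w (v j) = 0) ->
  forall j, dot w (ext v a j) = 0.
Proof. by move=> wa wv j; rewrite /ext; case: unlift. Qed.

Lemma indep_sub k r (v : 'I_r -> V) (h : 'I_k -> 'I_r) :
  injective h -> indep v -> indep (fun j => v (h j)).
Proof.
move=> hi iv l H.
pose l' i := if [pick j | h j == i] is Some j then l j else 0.
have l'h j : l' (h j) = l j.
  rewrite /l'; case: pickP => [j' /eqP /hi -> //|/(_ j)]; by rewrite eqxx.
have : \sum_i l' i *: v i = 0.
  rewrite (bigID (mem (h @: [set: 'I_k]%SET))) /= [X in _ + X]big1 ?addr0.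
    rewrite big_imset /=; last by move=> x y _ _; apply: hi.
    under eq_bigr do rewrite l'h.
    by rewrite -[RHS]H; apply: eq_bigl => j; rewrite inE.
  move=> i; rewrite /l'; case: pickP => [j /eqP <-|]; last by rewrite scale0r.
  by rewrite imset_f // in_setT.
by move/iv => H' j; rewrite -l'h H'.
Qed.

Lemma extract N (u : 'I_N -> V) (a : V) :
  (forall w, dot w a = 0 -> (forall i, dot w (u i) = 0) -> w = 0) ->
  exists f : 'I_n.-1 -> 'I_N, indep (fun j => u (f j)).
Proof.
move=> Hw.
pose U := rmx u.
pose C := col_mx U a^T.
have fC : row_free C^T.
  rewrite -kermx_eq0; apply/eqP/matrixP => r j; rewrite mxE.
  have := mulmx_ker C^T; move/(congr1 (row r)); rewrite row_mul row0 => H.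
  pose w := (row r (kermx C^T))^T.
  have Cw : C *m w = 0 by have := congr1 trmx H; rewrite trmx_mul trmxK trmx0.
  rewrite /C mul_col_mx in Cw.
  move/eqP: Cw; rewrite col_mx_eq0 => /andP [/eqP Uw /eqP aw].
  have w0 : w = 0.
    apply: Hw.
      by have := congr1 (fun M : 'M[R]_(1,1) => M 0 0) aw; rewrite !mxE => <-; rewrite dotC;
        apply: eq_bigr => i _; rewrite !mxE.
    move=> i; have := congr1 (fun M : 'M[R]_(N,1) => M i 0) Uw; rewrite !mxE => <-; rewrite dotC.
    by apply: eq_bigr => k _; rewrite !mxE.
  by have := congr1 (fun M : 'cV[R]_n => M j 0) w0; rewrite !mxE.
have rC : \rank C = n.
  by move: fC; rewrite /row_free mxrank_tr => /eqP.
have rU : (n.-1 <= \rank U)%N.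
  have := (mxrank_adds_leqif U a^T).1.
  rewrite addsmxE rC => H.
  have := leq_trans H (leq_add (leqnn _) (rank_leq_row a^T)).
  by move=> H2; rewrite -subn1 leq_subLR addnC.
pose g := maxrankfun U.
have ig : indep (fun j => u (g j)).
  apply: free_indep.
  have -> : rmx (fun j => u (g j)) = rowsub g U by apply/matrixP => i j; rewrite !mxE.
  exact: maxrowsub_free.
exists (fun j => g (widen_ord rU j)).
apply: (indep_sub (v := fun j => u (g j)) (h := fun j => widen_ord rU j)) _ ig.
by move=> x y /(congr1 val) /= /val_inj.
Qed.

Lemma key (S S' : set V) (a : V) beta p N (u : 'I_N -> V) :
  a != 0 -> has_affindep S n.-1 -> (forall x, S x -> dot a x = beta) ->
  (forall w, dot w a = 0 -> (forall i, dot w (u i) = 0) ->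
     forall x, S x -> dot w x = dot w p) ->
  (forall i, dot a (u i) = 0) -> S' p -> (forall i, S' (p + u i)) ->
  has_affindep S' n.-1.
Proof.
move=> a0 [x0 [x [Sx0 Sx ix]]] Sa Sw au S'p S'u.
have [f fi] : exists f : 'I_n.-1 -> 'I_N, indep (fun j => u (f j)).
  apply: (@extract _ _ a) => w wa wu.
  apply/eqP; apply: contraT => w0.
  have iv : indep (fun j => x j - x0) by [].
  have avx : forall j, dot a (x j - x0) = 0.
    by move=> j; rewrite dotBr !Sa // subrr.
  have wvx : forall j, dot w (x j - x0) = 0.
    by move=> j; rewrite dotBr !(Sw w wa wu) // subrr.
  have := indep_le (indep_ext (indep_ext iv a0 avx) w0 (dot_ext wa wvx)).
  by case: (n) => //= k; rewrite ltnn.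
exists p, (fun j => p + u (f j)); split => // l H j; apply: fi.
by rewrite -[RHS]H; apply: eq_bigr => i _; rewrite addrAC subrr add0r.
Qed.

Lemma has_affindep_le (S : set V) k j : (k <= j)%N -> has_affindep S j -> has_affindep S k.
Proof.
move=> kj [x0 [x [Sx0 Sx ix]]]; exists x0, (fun i => x (widen_ord kj i)); split => //.
apply: (indep_sub (v := fun i => x i - x0) (h := fun i => widen_ord kj i)) _ ix.
by move=> y z /(congr1 val) /= /val_inj.
Qed.

Lemma has_affindep_sub (S T : set V) k : S `<=` T -> has_affindep S k -> has_affindep T k.
Proof.
by move=> ST [x0 [x [Sx0 Sx ix]]]; exists x0, x; split => [|j|] //; apply: ST.
Qed.

Lemma has_affindep_bound (S : set V) k : has_affindep S k -> (k <= n)%N.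
Proof. by move=> [x0 [x [_ _ ix]]]; exact: (indep_le (v := fun j => x j - x0)). Qed.

Lemma hyperplane_dim (S : set V) a beta : a != 0 ->
  (forall x, S x -> dot a x = beta) -> ~ has_affindep S n.
Proof.
move=> a0 Sa [x0 [x [Sx0 Sx ix]]].
have avx : forall j, dot a (x j - x0) = 0.
  by move=> j; rewrite dotBr !Sa // subrr.
have := indep_le (indep_ext (v := fun j => x j - x0) ix a0 avx).
by rewrite ltnn.
Qed.

End LA.

Lemma eps_lemma (R : realType) N (c d : 'I_N -> R) :
  (forall i, 0 <= c i) -> (forall i, c i = 0 -> d i = 0) ->
  exists2 e, 0 < e & forall i, e * `|d i| <= c i.
Proof.
move=> c0 cd.
pose s := 1 + \sum_i `|d i| / c i.
have s0 : 0 < s by rewrite ltr_pwDl // sumr_ge0 // => i _; rewrite divr_ge0.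
exists s^-1; first by rewrite invr_gt0.
move=> i; have [ci0|ci0] := eqVneq (c i) 0.
  by rewrite ci0 (cd _ ci0) normr0 mulr0.
have cp : 0 < c i by rewrite lt_def ci0 c0.
rewrite mulrC ler_pdivrMr //.
have : `|d i| / c i <= s.
  apply: le_trans (ler_wpDl ler01 (le_refl _)); rewrite /s.
  by rewrite (bigD1 i) //= ler_wpDr // sumr_ge0 // => k _; rewrite divr_ge0.
by rewrite ler_pdivrMr // mulrC.
Qed.

Section Cone.
Variables (R : realType) (n M : nat) (A : 'M[R]_(M, n)) (b : 'cV[R]_M) (p : 'cV[R]_n)
  (B : {set 'I_M}).
Local Notation V := 'cV[R]_n.
Hypothesis cB : cobasis A b p B.

Let HB : #|B| = n. Proof. by case: cB. Qed.
Definition eB (j : 'I_n) : 'I_M := enum_val (cast_ord (esym HB) j).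

Lemma eB_in j : eB j \in B.
Proof. exact: enum_valP. Qed.
Lemma eB_inj : injective eB.
Proof. by move=> x y /enum_val_inj /cast_ord_inj. Qed.
Lemma eB_onto i : i \in B -> exists j, i = eB j.
Proof.
move=> iB; exists (cast_ord HB (enum_rank_in iB i)).
by rewrite /eB cast_ordK enum_rankK_in.
Qed.

Lemma sumB (T : zmodType) (F : 'I_M -> T) : \sum_(i in B) F i = \sum_j F (eB j).
Proof.
rewrite big_enum_val (reindex (cast_ord (esym HB))) /=; last first.
  by exists (cast_ord HB) => x _; [apply: cast_ordKV | apply: cast_ordK].
by [].
Qed.

Definition Mb : 'M[R]_n := \matrix_(j, k) A (eB j) k.

Lemma Mb_mul (x : V) j : (Mb *m x) j 0 = (A *m x) (eB j) 0.
Proof. by rewrite !mxE; apply: eq_bigr => k _; rewrite mxE. Qed.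

Lemma Mb_free : row_free Mb.
Proof.
have [_ li _] := cB.
rewrite -kermx_eq0; apply/eqP/matrixP => r j.
have := mulmx_ker Mb; move/(congr1 (row r)); rewrite row_mul row0.
set z := row r (kermx Mb) => H.
pose l i := \sum_(t | eB t == i) z 0 t.
have le t : l (eB t) = z 0 t.
  by rewrite /l (big_pred1 t) // => k; apply/eqP/eqP => [/eB_inj|->].
have : \sum_(i in B) l i *: row i A = 0.
  rewrite sumB -[RHS]H mulmx_sum_row; apply: eq_bigr => k _; rewrite le; congr (_ *: _).
  by apply/rowP => t; rewrite !mxE.
move/li => /(_ (eB j) (eB_in j)); rewrite le => zj.
by rewrite [RHS]mxE -zj /z [RHS]mxE.
Qed.

Lemma Mb_unit : Mb \in unitmx.
Proof. by rewrite -row_free_unit Mb_free. Qed.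

Definition gen (j : 'I_n) : V := col j (invmx Mb).

Lemma Mb_gen j k : (Mb *m gen k) j 0 = (j == k)%:R.
Proof.
have := mulmxV Mb_unit; move/matrixP => /(_ j k).
by rewrite !mxE => <-; apply: eq_bigr => t _; rewrite !mxE.
Qed.

Lemma A_gen j k : (A *m gen k) (eB j) 0 = (j == k)%:R.
Proof. by rewrite -Mb_mul Mb_gen. Qed.

Lemma decomp (x : V) : x = \sum_j (A *m x) (eB j) 0 *: gen j.
Proof.
have -> : \sum_j (A *m x) (eB j) 0 *: gen j = invmx Mb *m (Mb *m x).
  apply/matrixP => i k; rewrite (ord1 k) summxE !mxE; apply: eq_bigr => j _.
  by rewrite -Mb_mul !mxE mulrC.
by rewrite mulKmx // Mb_unit.
Qed.

Lemma gen_indep : indep (fun j => gen j).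
Proof.
move=> l H j; have := congr1 (fun x => (Mb *m x) j 0) H; rewrite /= mulmx0 [RHS]mxE.
rewrite mulmx_sumr summxE (bigD1 j) //= big1 ?addr0.
  by rewrite -scalemxAr mxE Mb_gen eqxx mulr1.
by move=> k kj; rewrite -scalemxAr mxE Mb_gen eq_sym (negPf kj) mulr0.
Qed.

Lemma gen_neq0 j : gen j != 0.
Proof.
apply/eqP => H; have := Mb_gen j j; rewrite H mulmx0 mxE eqxx => /eqP.
by rewrite eq_sym oner_eq0.
Qed.

Lemma A_gen_ge0 j i : i \in B -> 0 <= (A *m gen j) i 0.
Proof. by move=> /eB_onto [k ->]; rewrite A_gen ler0n. Qed.

Lemma mxBE (X Y : 'M[R]_(M, 1)) i j : (X - Y) i j = X i j - Y i j.
Proof. by rewrite !mxE. Qed.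
Lemma mxZE (X : 'M[R]_(M, 1)) c i j : (c *: X) i j = c * X i j.
Proof. by rewrite !mxE. Qed.
Lemma mxDE (X Y : 'M[R]_(M, 1)) i j : (X + Y) i j = X i j + Y i j.
Proof. by rewrite !mxE. Qed.

Lemma cone_mem (x : V) : basis_cone A b B x <-> forall i, i \in B -> 0 <= (A *m (x - p)) i 0.
Proof.
have [_ _ tB] := cB.
split => H i iB; have := H i iB; rewrite mulmxBr mxBE tB //.
  by rewrite subr_ge0.
by rewrite subr_ge0.
Qed.

Lemma ext_ray_ge0 d : ext_ray_dir (basis_cone A b B) p d ->
  forall i, i \in B -> 0 <= (A *m d) i 0.
Proof. by move=> [/cone_mem H _ _]; move: H; rewrite addrC addKr. Qed.

Lemma gen_ext j : ext_ray_dir (basis_cone A b B) p (gen j).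
Proof.
split; [|exact: gen_neq0|].
  by apply/cone_mem; rewrite addrC addKr; apply: A_gen_ge0.
move=> u v /cone_mem Hu /cone_mem Hv E.
rewrite addrC addKr in Hu; rewrite addrC addKr in Hv.
have uz k : k != j -> (A *m u) (eB k) 0 = 0.
  move=> kj; have := congr1 (fun x => (A *m x) (eB k) 0) E.
  rewrite /= A_gen (negPf kj) mulmxDr mxDE => /esym/eqP.
  rewrite paddr_eq0 ?Hu ?Hv ?eB_in // => /andP [/eqP -> _] //.
have vz k : k != j -> (A *m v) (eB k) 0 = 0.
  move=> kj; have := congr1 (fun x => (A *m x) (eB k) 0) E.
  rewrite /= A_gen (negPf kj) mulmxDr mxDE => /esym/eqP.
  rewrite paddr_eq0 ?Hu ?Hv ?eB_in // => /andP [_ /eqP ->] //.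
exists ((A *m u) (eB j) 0), ((A *m v) (eB j) 0); split.
- exact: Hu (eB_in j).
- exact: Hv (eB_in j).
- rewrite {1}(decomp u) (bigD1 j) //= big1 ?addr0 // => k kj.
  by rewrite uz // scale0r.
- rewrite {1}(decomp v) (bigD1 j) //= big1 ?addr0 // => k kj.
  by rewrite vz // scale0r.
Qed.


Lemma row_Mb t : row t Mb = row (eB t) A.
Proof. by apply/rowP => k; rewrite !mxE. Qed.

Lemma tight_zero : (forall B', cobasis A b p B' -> B' = B) ->
  forall i, i \notin B -> tight A b p i -> row i A = 0.
Proof.
move=> uq i iB ti; apply/eqP; apply: contraT => ri0.
have [_ li tB] := cB.
set mu := row i A *m invmx Mb.
have rE : row i A = mu *m Mb by rewrite /mu mulmxKV // Mb_unit.
have [j mj] : exists j, mu 0 j != 0.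
  case: (pickP (fun j => mu 0 j != 0)) => [j H|H]; first by exists j.
  exfalso; move/negP: ri0; apply; rewrite rE.
  have -> : mu = 0 by apply/rowP => t; have := H t => /= /negbFE /eqP ->; rewrite mxE.
  by rewrite mul0mx.
set B' := i |: (B :\ eB j).
have iB' : i \notin B :\ eB j by rewrite in_setD1 (negPf iB) andbF.
have cB' : cobasis A b p B'.
  split.
  - rewrite cardsU1 iB' -HB (cardsD1 (eB j) B) eB_in.
    by [].
  - move=> l H.
    rewrite /B' big_setU1 //= in H.
    pose c t := l i * mu 0 t + (if t == j then 0 else l (eB t)).
    have E : \sum_(k in B :\ eB j) l k *: row k A
        = \sum_t (if t == j then 0 else l (eB t)) *: row t Mb.
      have -> : \sum_(k in B :\ eB j) l k *: row k A =
                \sum_(k in B) (if k == eB j then 0 else l k *: row k A).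
        rewrite [RHS](bigD1 (eB j)) ?eB_in //= eqxx add0r.
        apply: eq_big => k; first by rewrite in_setD1 andbC.
        by rewrite in_setD1 => /andP [/negPf -> _].
      rewrite sumB; apply: eq_bigr => t _; rewrite row_Mb.
      have -> : (eB t == eB j) = (t == j) by apply/eqP/eqP => [/eB_inj|->].
      by case: (t == j); rewrite ?scale0r.
    rewrite E rE mulmx_sum_row scaler_sumr -big_split /= in H.
    have Hc : (\row_t c t) *m Mb = 0.
      rewrite mulmx_sum_row -[RHS]H; apply: eq_bigr => t _.
      by rewrite mxE scalerA -scalerDl.
    move/eqP: Hc; rewrite mulmx_free_eq0 ?Mb_free // => /eqP Hc.
    have c0 t : c t = 0 by have := congr1 (fun z : 'rV[R]_n => z 0 t) Hc; rewrite !mxE.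
    have li0 : l i = 0.
      by have := c0 j; rewrite /c eqxx addr0 => /eqP; rewrite mulf_eq0 (negPf mj) orbF => /eqP.
    move=> k; rewrite in_setU1 => /orP [/eqP -> //|].
    rewrite in_setD1 => /andP [kj kB].
    have [t kt] := eB_onto kB.
    have tj : t != j by apply: contraNneq kj => tj; rewrite kt tj.
    by have := c0 t; rewrite /c li0 mul0r add0r (negPf tj) -kt.
  - move=> k; rewrite in_setU1 => /orP [/eqP -> //|].
    by rewrite in_setD1 => /andP [_ /tB].
have := uq _ cB'; move/setP => /(_ i); rewrite in_setU1 eqxx /= => E.
by move: iB; rewrite -E.
Qed.

Lemma local (d : V) : polyh A b p -> (forall B', cobasis A b p B' -> B' = B) ->
  (forall i, i \in B -> 0 <= (A *m d) i 0) ->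
  exists2 lam, 0 < lam & polyh A b (p + lam *: d).
Proof.
move=> Pp uq dB.
pose c i := (A *m p) i 0 - b i 0.
pose dd i := if c i == 0 then 0 else (A *m d) i 0.
have [e e0 He] : exists2 e, 0 < e & forall i, e * `|dd i| <= c i.
  apply: eps_lemma => i; first by rewrite subr_ge0 Pp.
  by rewrite /dd => ->; rewrite eqxx.
exists e => // i.
have Hi := He i.
rewrite mulmxDr mxDE -scalemxAr mxZE.
rewrite /dd in Hi.
case: (eqVneq (c i) 0) => ci.
  have ti : (A *m p) i 0 = b i 0 by move: ci; rewrite /c => /eqP; rewrite subr_eq0 => /eqP.
  case: (boolP (i \in B)) => iB.
    by rewrite ti ler_wpDr //; apply: mulr_ge0; [exact: ltW | exact: dB].
  have := tight_zero uq iB ti => ri.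
  have -> : (A *m d) i 0 = 0.
    rewrite mxE big1 // => k _.
    by have := congr1 (fun z : 'rV[R]_n => z 0 k) ri; rewrite !mxE => ->; rewrite mul0r.
  by rewrite mulr0 addr0 ti.
rewrite (negPf ci) /c in Hi.
rewrite -lerBlDl; apply: le_trans (_ : - (e * `|(A *m d) i 0|) <= _).
  by rewrite lerNr opprB.
by rewrite -mulrN; apply: ler_wpM2l; [exact: ltW | rewrite lerNl -normrN; exact: ler_norm].
Qed.

End Cone.

Section Abstract.
Variables (R : realType) (n : nat).
Local Notation V := 'cV[R]_n.
Variables (p1 p2 : V) (P1 P2 E1 E2 : set V) (g1 g2 : 'I_n -> V).
Hypotheses (P1p : P1 p1) (P2p : P2 p2).
Hypothesis dec1 : forall x, P1 x -> exists mu : 'I_n -> R,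
  (forall j, 0 <= mu j) /\ x = p1 + \sum_j mu j *: g1 j.
Hypothesis dec2 : forall x, P2 x -> exists mu : 'I_n -> R,
  (forall j, 0 <= mu j) /\ x = p2 + \sum_j mu j *: g2 j.
Hypothesis rdec1 : forall d, E1 d -> exists mu : 'I_n -> R,
  (forall j, 0 <= mu j) /\ d = \sum_j mu j *: g1 j.
Hypothesis rdec2 : forall d, E2 d -> exists mu : 'I_n -> R,
  (forall j, 0 <= mu j) /\ d = \sum_j mu j *: g2 j.
Hypotheses (gE1 : forall j, E1 (g1 j)) (gE2 : forall j, E2 (g2 j)).
Hypothesis loc1 : forall d, E1 d -> exists2 lam, 0 < lam & P1 (p1 + lam *: d).
Hypothesis loc2 : forall d, E2 d -> exists2 lam, 0 < lam & P2 (p2 + lam *: d).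
Hypotheses (ind1 : indep g1) (ind2 : indep g2).

Definition PDa := closure (conv (P1 `|` P2)).
Definition PD0a := msum (conv [set x | x = p1 \/ x = p2]) (cone (E1 `|` E2)).

Lemma dot0l (x : V) : dot 0 x = 0.
Proof. by rewrite dotC dot0r. Qed.

Lemma conv_pt (S : set V) x : S x -> conv S x.
Proof.
move=> Sx; exists 1%N, (fun _ => x), (fun _ => 1); split => //.
  by rewrite big_ord1.
by rewrite big_ord1 scale1r.
Qed.

Lemma cone_pt (S : set V) x : S x -> cone S x.
Proof. by move=> Sx; exists 1%N, (fun _ => x), (fun _ => 1); split => //; rewrite big_ord1 scale1r. Qed.

Lemma cone0 (S : set V) : cone S 0.
Proof. by exists 0%N, (fun _ => 0), (fun _ => 0); split => [[]|[]|] //; rewrite big_ord0. Qed.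

Lemma PD0_q q d : (q = p1 \/ q = p2) -> (E1 `|` E2) d -> PD0a (q + d).
Proof. by move=> hq hd; exists q, d; split => //; [apply: conv_pt | apply: cone_pt]. Qed.

Lemma PD0_p q : (q = p1 \/ q = p2) -> PD0a q.
Proof. by move=> hq; exists q, 0; split; [apply: conv_pt | apply: cone0 | rewrite addr0]. Qed.

Lemma PD_P1 x : P1 x -> PDa x.
Proof. by move=> hx; apply: subset_closure; apply: conv_pt; left. Qed.
Lemma PD_P2 x : P2 x -> PDa x.
Proof. by move=> hx; apply: subset_closure; apply: conv_pt; right. Qed.

Lemma dot_dec (a : V) (mu : 'I_n -> R) (g : 'I_n -> V) :
  dot a (\sum_j mu j *: g j) = \sum_j mu j * dot a (g j).
Proof. by rewrite dot_sumr; apply: eq_bigr => j _; rewrite dotZr. Qed.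

Lemma ray_ge0 (a d : V) (g : 'I_n -> V) mu : (forall j, 0 <= mu j) ->
  d = \sum_j mu j *: g j -> (forall j, 0 <= dot a (g j)) -> 0 <= dot a d.
Proof. by move=> mu0 -> ag; rewrite dot_dec sumr_ge0 // => j _; rewrite mulr_ge0. Qed.

Lemma ray_w (a w d : V) (g : 'I_n -> V) mu : (forall j, 0 <= mu j) ->
  d = \sum_j mu j *: g j -> (forall j, 0 <= dot a (g j)) -> dot a d = 0 ->
  (forall j, dot a (g j) = 0 -> dot w (g j) = 0) -> dot w d = 0.
Proof.
move=> mu0 dE ag ad aw.
have P0 : forall j : 'I_n, true -> 0 <= mu j * dot a (g j) by move=> j _; rewrite mulr_ge0.
rewrite dE dot_dec in ad.
rewrite dE dot_dec big1 // => j _.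
have := @psumr_eq0P _ _ _ _ P0 ad j isT; move/eqP; rewrite mulf_eq0 => /orP [/eqP ->|/eqP h].
  by rewrite mul0r.
by rewrite aw // mulr0.
Qed.

Lemma conv2_dot (v : V) t y : dot v p1 = t -> dot v p2 = t ->
  conv [set x | x = p1 \/ x = p2] y -> dot v y = t.
Proof.
move=> h1 h2 [k [s [l [Ss l0 l1 ->]]]].
rewrite dot_sumr -[RHS]mul1r -l1 mulr_suml; apply: eq_bigr => j _.
by rewrite dotZr; case: (Ss j) => ->; rewrite ?h1 ?h2.
Qed.

Lemma cone_dot (S : set V) (a z : V) : (forall d, S d -> 0 <= dot a d) -> cone S z -> 0 <= dot a z.
Proof.
move=> H [k [s [l [Ss l0 ->]]]]; rewrite dot_sumr sumr_ge0 // => j _.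
by rewrite dotZr mulr_ge0 // H.
Qed.

Lemma valid_PD0 (a : V) beta : dot a p1 = beta -> dot a p2 = beta ->
  (forall d, (E1 `|` E2) d -> 0 <= dot a d) -> valid_ineq PD0a a beta.
Proof.
move=> h1 h2 H x [y [z [cy cz ->]]].
by rewrite dotDr (conv2_dot h1 h2 cy) lerDl (cone_dot H cz).
Qed.

Lemma rays_ge0 (a : V) : (forall j, 0 <= dot a (g1 j)) -> (forall j, 0 <= dot a (g2 j)) ->
  forall d, (E1 `|` E2) d -> 0 <= dot a d.
Proof.
move=> a1 a2 d [/rdec1 [mu [mu0 dE]]|/rdec2 [mu [mu0 dE]]].
  exact: ray_ge0 mu0 dE a1.
exact: ray_ge0 mu0 dE a2.
Qed.

Lemma F0_w (a w : V) beta : dot a p1 = beta -> dot a p2 = beta ->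
  (forall j, 0 <= dot a (g1 j)) -> (forall j, 0 <= dot a (g2 j)) ->
  (forall j, dot a (g1 j) = 0 -> dot w (g1 j) = 0) ->
  (forall j, dot a (g2 j) = 0 -> dot w (g2 j) = 0) ->
  dot w p2 = dot w p1 ->
  forall x, PD0a x -> dot a x = beta -> dot w x = dot w p1.
Proof.
move=> h1 h2 a1 a2 w1 w2 wp x [y [z [cy [k [s [l [Ss l0 zE]]]] ->]]].
rewrite !dotDr (conv2_dot h1 h2 cy) (conv2_dot erefl wp cy).
move=> /eqP; rewrite -{2}[beta]addr0 => /eqP /addrI az.
suff -> : dot w z = 0 by rewrite addr0.
have ad j : 0 <= dot a (s j) by apply: rays_ge0.
have P0 : forall j : 'I_k, true -> 0 <= l j * dot a (s j) by move=> j _; rewrite mulr_ge0.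
have az' : \sum_j l j * dot a (s j) = 0.
  by rewrite -[RHS]az zE dot_sumr; apply: eq_bigr => j _; rewrite dotZr.
rewrite zE dot_sumr big1 // => j _; rewrite dotZr.
have := @psumr_eq0P _ _ _ _ P0 az' j isT; move/eqP; rewrite mulf_eq0 => /orP [/eqP ->|/eqP h].
  by rewrite mul0r.
case: (Ss j) => [/rdec1 [mu [mu0 dE]]|/rdec2 [mu [mu0 dE]]].
  by rewrite (ray_w mu0 dE a1 h w1) mulr0.
by rewrite (ray_w mu0 dE a2 h w2) mulr0.
Qed.

Lemma indep_eq k (v v' : 'I_k -> V) : (forall j, v j = v' j) -> indep v' -> indep v.
Proof. by move=> E iv l H; apply: iv; rewrite -[RHS]H; apply: eq_bigr => j _; rewrite E. Qed.

Lemma indep_scale k (v : 'I_k -> V) (lam : 'I_k -> R) : (forall j, lam j != 0) ->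
  indep v -> indep (fun j => lam j *: v j).
Proof.
move=> l0 iv l H j.
have := iv (fun j => l j * lam j); rewrite -[RHS]H => /(_ _ j).
have E : \sum_j (l j * lam j) *: v j = \sum_j l j *: (lam j *: v j).
  by apply: eq_bigr => t _; rewrite scalerA.
move=> /(_ E) /eqP; rewrite mulf_eq0 (negPf (l0 j)) orbF => /eqP //.
Qed.

Lemma has_PD0n : has_affindep PD0a n.
Proof.
exists p1, (fun j => p1 + g1 j); split; first by apply: PD0_p; left.
  by move=> j; apply: PD0_q; [left | left].
by apply: indep_eq ind1 => j; rewrite addrAC subrr add0r.
Qed.

Lemma lam_exists1 : exists lam : 'I_n -> R, forall j, 0 < lam j /\ P1 (p1 + lam j *: g1 j).
Proof.
apply: (@fin_all_exists _ (fun _ => R) (fun j l => 0 < l /\ P1 (p1 + l *: g1 j))) => j.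
by have [l l0 Pl] := loc1 (gE1 j); exists l.
Qed.
Lemma lam_exists2 : exists lam : 'I_n -> R, forall j, 0 < lam j /\ P2 (p2 + lam j *: g2 j).
Proof.
apply: (@fin_all_exists _ (fun _ => R) (fun j l => 0 < l /\ P2 (p2 + l *: g2 j))) => j.
by have [l l0 Pl] := loc2 (gE2 j); exists l.
Qed.

Lemma has_PDn : has_affindep PDa n.
Proof.
have [lam Hl] := lam_exists1.
exists p1, (fun j => p1 + lam j *: g1 j); split; first exact: PD_P1.
  by move=> j; apply: PD_P1; case: (Hl j).
apply: indep_eq (indep_scale _ ind1) => [j|j]; first by rewrite addrAC subrr add0r.
by case: (Hl j) => /gt_eqF -> _.
Qed.

Definition mku (q : V) (h1 h2 : 'I_n -> V) (i : 'I_(1 + (n + n))) : V :=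
  match fintype.split i with
  | inl _ => q
  | inr j => match fintype.split j with inl t => h1 t | inr t => q + h2 t end
  end.

Lemma mku_cases (P : V -> Prop) q h1 h2 : P q -> (forall t, P (h1 t)) ->
  (forall t, P (q + h2 t)) -> forall i, P (mku q h1 h2 i).
Proof. by move=> Pq P1' P2' i; rewrite /mku; case: fintype.split => // j; case: fintype.split. Qed.

Lemma mku0 q h1 h2 : mku q h1 h2 (unsplit (inl ord0)) = q.
Proof. by rewrite /mku unsplitK. Qed.
Lemma mku1 q h1 h2 t : mku q h1 h2 (unsplit (inr (unsplit (inl t)))) = h1 t.
Proof. by rewrite /mku !unsplitK. Qed.
Lemma mku2 q h1 h2 t : mku q h1 h2 (unsplit (inr (unsplit (inr t)))) = q + h2 t.
Proof. by rewrite /mku !unsplitK. Qed.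

Lemma w_facts (a w : V) (lam1 lam2 : 'I_n -> R) :
  (forall j, lam1 j != 0) -> (forall j, lam2 j != 0) ->
  (forall i, dot w (mku (p2 - p1)
     (fun t => if dot a (g1 t) == 0 then lam1 t *: g1 t else 0)
     (fun t => if dot a (g2 t) == 0 then lam2 t *: g2 t else 0) i) = 0) ->
  [/\ dot w p2 = dot w p1,
      forall j, dot a (g1 j) = 0 -> dot w (g1 j) = 0 &
      forall j, dot a (g2 j) = 0 -> dot w (g2 j) = 0].
Proof.
move=> l1 l2 wu.
have wp : dot w p2 = dot w p1.
  by have := wu (unsplit (inl ord0)); rewrite mku0 dotBr => /eqP; rewrite subr_eq0 => /eqP.
split => // j aj.
  have := wu (unsplit (inr (unsplit (inl j)))); rewrite mku1 aj eqxx dotZr.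
  by move/eqP; rewrite mulf_eq0 (negPf (l1 j)) => /eqP.
have := wu (unsplit (inr (unsplit (inr j)))); rewrite mku2 aj eqxx dotDr dotBr wp subrr add0r dotZr.
by move/eqP; rewrite mulf_eq0 (negPf (l2 j)) => /eqP.
Qed.

Lemma a_mku (a : V) beta (lam1 lam2 : 'I_n -> R) : dot a p1 = beta -> dot a p2 = beta ->
  forall i, dot a (mku (p2 - p1)
     (fun t => if dot a (g1 t) == 0 then lam1 t *: g1 t else 0)
     (fun t => if dot a (g2 t) == 0 then lam2 t *: g2 t else 0) i) = 0.
Proof.
move=> h1 h2; apply: (mku_cases (P := fun v => dot a v = 0)) => [|t|t]; first by rewrite dotBr h1 h2 subrr.
  by case: eqP => [h|_]; rewrite ?dotZr ?h ?mulr0 ?dot0r.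
rewrite dotDr dotBr h1 h2 subrr add0r.
by case: eqP => [h|_]; rewrite ?dotZr ?h ?mulr0 ?dot0r.
Qed.

Lemma claim1 (a : V) beta : facet_ineq PD0a a beta -> dot a p1 = beta -> dot a p2 = beta ->
  facet_ineq PDa a beta.
Proof.
move=> [vA [k [[hP0 nhP0] [hF0 nhF0]]]] ap1 ap2.
have ag1 j : 0 <= dot a (g1 j).
  have := vA _ (PD0_q (or_introl erefl) (or_introl (gE1 j))).
  by rewrite dotDr ap1 lerDl.
have ag2 j : 0 <= dot a (g2 j).
  have := vA _ (PD0_q (or_intror erefl) (or_intror (gE2 j))).
  by rewrite dotDr ap2 lerDl.
have vP : valid_ineq PDa a beta.
  apply: valid_closure; apply: valid_conv => x [/dec1 [mu [mu0 ->]]|/dec2 [mu [mu0 ->]]].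
    by rewrite dotDr ap1 lerDl dot_dec sumr_ge0 // => j _; rewrite mulr_ge0.
  by rewrite dotDr ap2 lerDl dot_dec sumr_ge0 // => j _; rewrite mulr_ge0.
have a0 : a != 0.
  apply/eqP => a0; apply: nhF0; apply: has_affindep_sub hP0 => x Px; split => //.
  by rewrite -ap1 a0 !dot0l.
have kn : k.+1 = n.
  apply/eqP; rewrite eqn_leq (has_affindep_bound hP0) /= leqNgt; apply/negP => lt.
  by apply: nhP0; exact: has_affindep_le lt has_PD0n.
have kn' : k = n.-1 by rewrite -kn.
split => //; exists k; split.
  split; first by rewrite kn; exact: has_PDn.
  by move/has_affindep_bound; rewrite kn ltnn.
split; last first.
  by rewrite kn; exact: (hyperplane_dim (S := face_of PDa a beta) a0 (fun x h => proj2 h)).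
have [lam1 Hl1] := lam_exists1.
have [lam2 Hl2] := lam_exists2.
have l1 j : lam1 j != 0 by case: (Hl1 j) => /gt_eqF ->.
have l2 j : lam2 j != 0 by case: (Hl2 j) => /gt_eqF ->.
pose u := mku (p2 - p1)
     (fun t => if dot a (g1 t) == 0 then lam1 t *: g1 t else 0)
     (fun t => if dot a (g2 t) == 0 then lam2 t *: g2 t else 0).
have hS : has_affindep (face_of PD0a a beta) n.-1 by rewrite -kn'.
have Sa : forall x, face_of PD0a a beta x -> dot a x = beta by move=> x [].
have Sw : forall w, dot w a = 0 -> (forall i, dot w (u i) = 0) ->
    forall x, face_of PD0a a beta x -> dot w x = dot w p1.
  move=> w wa wu x [PD0x ax].
  have [wp w1 w2] := w_facts l1 l2 wu.
  exact: (F0_w ap1 ap2 ag1 ag2 w1 w2 wp PD0x ax).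
have au : forall i, dot a (u i) = 0 by move=> i; exact: (a_mku lam1 lam2 ap1 ap2 i).
have S'p : face_of PDa a beta p1 by split => //; apply: PD_P1.
have S'u : forall i, face_of PDa a beta (p1 + u i).
  apply: (mku_cases (P := fun v => face_of PDa a beta (p1 + v))) => [|t|t].
  + by rewrite addrC subrK; split => //; apply: PD_P2.
  + case: eqP => [h|_]; last by rewrite addr0; split => //; apply: PD_P1.
    split; first by apply: PD_P1; case: (Hl1 t).
    by rewrite dotDr dotZr h mulr0 addr0.
  + rewrite addrA [p1 + _]addrC subrK.
    case: eqP => [h|_]; last by rewrite addr0; split => //; apply: PD_P2.
    split; first by apply: PD_P2; case: (Hl2 t).
    by rewrite dotDr dotZr h mulr0 addr0.
rewrite kn'; exact: (key a0 hS Sa Sw au S'p S'u).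
Qed.


Lemma claim2 (a : V) beta : facet_ineq PDa a beta -> dot a p1 = beta -> dot a p2 = beta ->
  facet_ineq PD0a a beta.
Proof.
move=> [vA [k [[hP nhP] [hF nhF]]]] ap1 ap2.
have adE1 d : E1 d -> 0 <= dot a d.
  move=> Ed; have [l l0 Pl] := loc1 Ed; have := vA _ (PD_P1 Pl).
  by rewrite dotDr dotZr ap1 lerDl pmulr_rge0.
have adE2 d : E2 d -> 0 <= dot a d.
  move=> Ed; have [l l0 Pl] := loc2 Ed; have := vA _ (PD_P2 Pl).
  by rewrite dotDr dotZr ap2 lerDl pmulr_rge0.
have ag1 j : 0 <= dot a (g1 j) := adE1 _ (gE1 j).
have ag2 j : 0 <= dot a (g2 j) := adE2 _ (gE2 j).
have vP0 : valid_ineq PD0a a beta := valid_PD0 ap1 ap2 (rays_ge0 ag1 ag2).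
have a0 : a != 0.
  apply/eqP => a0; apply: nhF; apply: has_affindep_sub hP => x Px; split => //.
  by rewrite -ap1 a0 !dot0l.
have kn : k.+1 = n.
  apply/eqP; rewrite eqn_leq (has_affindep_bound hP) /= leqNgt; apply/negP => lt.
  by apply: nhP; exact: has_affindep_le lt has_PDn.
have kn' : k = n.-1 by rewrite -kn.
split => //; exists k; split.
  split; first by rewrite kn; exact: has_PD0n.
  by move/has_affindep_bound; rewrite kn ltnn.
split; last first.
  by rewrite kn; exact: (hyperplane_dim (S := face_of PD0a a beta) a0 (fun x h => proj2 h)).
have l1 : forall j : 'I_n, (1 : R) != 0 by move=> _; exact: oner_neq0.
pose u := mku (p2 - p1)
     (fun t => if dot a (g1 t) == 0 then (fun _ => 1) t *: g1 t else 0)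
     (fun t => if dot a (g2 t) == 0 then (fun _ => 1) t *: g2 t else 0).
have hS : has_affindep (face_of PDa a beta) n.-1 by rewrite -kn'.
have Sa : forall x, face_of PDa a beta x -> dot a x = beta by move=> x [].
have Sw : forall w, dot w a = 0 -> (forall i, dot w (u i) = 0) ->
    forall x, face_of PDa a beta x -> dot w x = dot w p1.
  move=> w wa wu x [PDx ax].
  have [wp w1 w2] := w_facts l1 l1 wu.
  pose gg (i : 'I_(n + n)) := match fintype.split i with inl t => g1 t | inr t => g2 t end.
  have [e e0 He] := @eps_lemma R _ (fun i => dot a (gg i)) (fun i => dot w (gg i))
    (fun i => ltac:(rewrite /gg; case: fintype.split => t; [exact: ag1 | exact: ag2]))
    (fun i => ltac:(rewrite /gg; case: fintype.split => t; [exact: w1 | exact: w2])).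
  have gpos s (v : V) i : `|s| <= e -> v = gg i -> 0 <= dot (a + s *: w) v.
    move=> hs ->; rewrite dotDl dotZl.
    rewrite -lerBlDr sub0r; apply: le_trans (He i).
    apply: le_trans (ler_norm _) _; rewrite normrN normrM ler_wpM2r //.
  have vs : forall s, `|s| <= e -> valid_ineq PDa (a + s *: w) (beta + s * dot w p1).
    move=> s hs; apply: valid_closure; apply: valid_conv.
    move=> y [/dec1 [mu [mu0 ->]]|/dec2 [mu [mu0 ->]]].
      rewrite dotDr dotDl dotZl ap1 lerDl dot_dec sumr_ge0 // => j _.
      rewrite mulr_ge0 //; apply: (gpos s _ (unsplit (inl j)) hs).
      by rewrite /gg unsplitK.
    rewrite dotDr dotDl dotZl ap2 wp lerDl dot_dec sumr_ge0 // => j _.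
    rewrite mulr_ge0 //; apply: (gpos s _ (unsplit (inr j)) hs).
    by rewrite /gg unsplitK.
  have h1 := vs e (ltac:(by rewrite gtr0_norm)) x PDx.
  have h2 := vs (- e) (ltac:(by rewrite normrN gtr0_norm)) x PDx.
  rewrite dotDl dotZl ax lerD2l ler_pM2l // in h1.
  rewrite dotDl dotZl ax lerD2l !mulNr lerN2 ler_pM2l // in h2.
  by apply/eqP; rewrite eq_le h1 h2.
have au : forall i, dot a (u i) = 0 by move=> i; exact: (a_mku _ _ ap1 ap2 i).
have S'p : face_of PD0a a beta p1 by split => //; apply: PD0_p; left.
have S'u : forall i, face_of PD0a a beta (p1 + u i).
  apply: (mku_cases (P := fun v => face_of PD0a a beta (p1 + v))) => [|t|t].
  + by rewrite addrC subrK; split => //; apply: PD0_p; right.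
  + case: eqP => [h|_]; last by rewrite addr0; split => //; apply: PD0_p; left.
    rewrite scale1r; split; first by apply: PD0_q; [left | left; apply: gE1].
    by rewrite dotDr h addr0.
  + rewrite addrA [p1 + _]addrC subrK.
    case: eqP => [h|_]; last by rewrite addr0; split => //; apply: PD0_p; right.
    rewrite scale1r; split; first by apply: PD0_q; [right | right; apply: gE2].
    by rewrite dotDr h addr0.
rewrite kn'; exact: (key a0 hS Sa Sw au S'p S'u).
Qed.

End Abstract.

Lemma conc_dec (R : realType) n M (A : 'M[R]_(M, n)) b p B (cB : cobasis A b p B) x :
  polyh A b x -> exists mu : 'I_n -> R, (forall j, 0 <= mu j) /\ x = p + \sum_j mu j *: gen cB j.
Proof.
move=> Px.
have : basis_cone A b B x by move=> i _; apply: Px.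
move/(cone_mem cB) => H.
exists (fun j => (A *m (x - p)) (eB cB j) 0); split.
  by move=> j; apply: H; apply: eB_in.
by rewrite -decomp addrC subrK.
Qed.

Lemma conc_rdec (R : realType) n M (A : 'M[R]_(M, n)) b p B (cB : cobasis A b p B) d :
  ext_ray_dir (basis_cone A b B) p d ->
  exists mu : 'I_n -> R, (forall j, 0 <= mu j) /\ d = \sum_j mu j *: gen cB j.
Proof.
move=> Ed; have H := ext_ray_ge0 cB Ed.
exists (fun j => (A *m d) (eB cB j) 0); split; last exact: decomp.
by move=> j; apply: H; apply: eB_in.
Qed.

Lemma conc_loc (R : realType) n M (A : 'M[R]_(M, n)) b p B (cB : cobasis A b p B) :
  polyh A b p -> (forall B', cobasis A b p B' -> B' = B) ->
  forall d, ext_ray_dir (basis_cone A b B) p d ->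
  exists2 lam, 0 < lam & polyh A b (p + lam *: d).
Proof. by move=> Pp uq d Ed; apply: (local cB Pp uq (ext_ray_ge0 cB Ed)). Qed.

Theorem theorem3 (R : realType) (n m : nat)
  (A : 'M[rat]_(m, n)) (b : 'cV[rat]_m) (c xbar : 'cV[R]_n)
  (pi : 'cV[int]_n) (pi0 : int) (p1 p2 : 'cV[R]_n) (B1 B2 : {set 'I_(m + 1)}) :
  affdim (polyh (ratmx R A) (ratmx R b)) n ->
  pointed (polyh (ratmx R A) (ratmx R b)) ->
  basic_optimal (ratmx R A) (ratmx R b) c xbar ->
  ~ PD A b pi pi0 xbar ->
  basic_optimal (sysA1 R A pi) (sysb1 R b pi0) c p1 ->
  basic_optimal (sysA2 R A pi) (sysb2 R b pi0) c p2 ->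
  cobasis (sysA1 R A pi) (sysb1 R b pi0) p1 B1 ->
  cobasis (sysA2 R A pi) (sysb2 R b pi0) p2 B2 ->
  (forall B, cobasis (sysA1 R A pi) (sysb1 R b pi0) p1 B -> B = B1) ->
  (forall B, cobasis (sysA2 R A pi) (sysb2 R b pi0) p2 B -> B = B2) ->
  (forall (a : 'cV[R]_n) (beta : R),
     facet_ineq (PD0 A b pi pi0 p1 p2 B1 B2) a beta ->
     dot a p1 = beta -> dot a p2 = beta ->
     facet_ineq (PD A b pi pi0) a beta) /\
  (forall (a : 'cV[R]_n) (beta : R),
     facet_ineq (PD A b pi pi0) a beta ->
     dot a p1 = beta -> dot a p2 = beta -> dot a xbar < beta ->
     facet_ineq (PD0 A b pi pi0 p1 p2 B1 B2) a beta).
Proof.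
move=> _ _ _ _ [P1p _ _] [P2p _ _] cB1 cB2 uq1 uq2.
have dec1 := conc_dec cB1; have dec2 := conc_dec cB2.
have rdec1 := conc_rdec cB1; have rdec2 := conc_rdec cB2.
have gE1 := gen_ext cB1; have gE2 := gen_ext cB2.
have loc1 := conc_loc cB1 P1p uq1; have loc2 := conc_loc cB2 P2p uq2.
have ind1 : indep (gen cB1) by move=> l; exact: (@gen_indep _ _ _ _ _ _ _ cB1 l).
split.
  move=> a beta F h1 h2.
  exact: (claim1 P1p P2p dec1 dec2 rdec1 rdec2 gE1 gE2 loc1 loc2 ind1 F h1 h2).
move=> a beta F h1 h2 _.
exact: (claim2 P1p dec1 dec2 rdec1 rdec2 gE1 gE2 loc1 loc2 ind1 F h1 h2).
Qed.
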